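(* Let $\Gamma$ be a finite group, $F:\Gamma\to\Gamma$ a group automorphism, and $\mathbf{E}=\bigoplus_{w\in\Gamma}\mathbf{E}_w$ a finite-dimensional associative $\bar{\mathbb{Q}}_l$-algebra with $1$ with $\dim\mathbf{E}_w=1$, $\mathbf{E}_w\mathbf{E}_y=\mathbf{E}_{wy}$; choose basis elements $b_w\in\mathbf{E}_w$. Let $\iota:\mathbf{E}\to\mathbf{E}$ be an algebra automorphism with $\iota(\mathbf{E}_w)=\mathbf{E}_{F(w)}$ for all $w$. Let $V_1,\dots,V_{r'}$ be representatives of the isomorphism classes of simple $\mathbf{E}$-modules, numbered so that exactly for $i\in[1,r]$ there is a linear isomorphism $\iota_i:V_i\to V_i$ with $\iota_i(ev)=\iota(e)\iota_i(v)$ for all $e\in\mathbf{E}$, $v\in V_i$; fix such $\iota_i$. Let $\bar\Gamma$ be a set of representatives for the effective $F$-twisted conjugacy classes in $\Gamma$. Then the matrix $(\mathrm{tr}(b_x\iota_i,V_i))_{i\in[1,r],x\in\bar\Gamma}$ is square and invertible; in particular $|\bar\Gamma|=r$.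
   Context: The $F$-twisted conjugacy classes of $\Gamma$ are the orbits of the action $y:w\mapsto F^{-1}(y)wy^{-1}$. For $x\in\Gamma$ let $\Gamma_x=\{y: F^{-1}(y)xy^{-1}=x\}$ and define $\gamma_x:\Gamma_x\to\bar{\mathbb{Q}}_l^*$ by $\iota^{-1}(b_y)b_x=\gamma_x(y)b_xb_y$; $x$ is effective if $\gamma_x\equiv1$. Effectiveness is constant on $F$-twisted conjugacy classes, and a class is called effective if its elements are effective. *)

(* Defs.v *)
From HB Require Import structures.
From mathcomp Require Import all_boot all_order all_algebra all_fingroup all_field.
From mathcomp Require Import algC.
Set Implicit Arguments. Unset Strict Implicit. Unset Printing Implicit Defensive.
Import GRing.Theory.
Local Open Scope ring_scope.

Section Twisted.
Variable gT : finGroupType.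
Variable Finv : gT -> gT.

Definition twact (y w : gT) : gT := (Finv y * w * y^-1)%g.

Definition twclass (x : gT) : {set gT} := [set twact y x | y : gT].

Definition twstab (x : gT) : {set gT} := [set y : gT | twact y x == x].
End Twisted.

(* [iota] is an algebra automorphism of A, [(iota^-1)%VF] its inverse;
   gamma_x(y) is the scalar with iota^{-1}(b_y) b_x = gamma_x(y) b_x b_y;
   x is effective iff gamma_x = 1 identically on Gamma_x, i.e. iff
   iota^{-1}(b_y) b_x = b_x b_y for all y in Gamma_x. *)
Definition effective (gT : finGroupType) (A : falgType algC)
  (Finv : gT -> gT) (b : gT -> A) (iota : 'AEnd(A)) (x : gT) : Prop :=
  forall y : gT, y \in twstab Finv x ->
    (iota^-1)%VF (b y) * b x = b x * b y.

(* A left E-module of dimension n is encoded on row vectors 'rV_n: the action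
   of e on v is  v *m rho e, so rho must satisfy rho (a * b) = rho b *m rho a. *)
Definition is_Emodule (A : falgType algC) (n : nat)
  (rho : A -> 'M[algC]_n) : Prop :=
  [/\ forall (c : algC) (a a' : A), rho (c *: a + a') = c *: rho a + rho a',
      rho 1 = 1%:M
    & forall a a' : A, rho (a * a') = rho a' *m rho a].

Definition is_simple_Emodule (A : falgType algC) (n : nat)
  (rho : A -> 'M[algC]_n) : Prop :=
  [/\ is_Emodule rho, (0 < n)%N &
      forall U : 'M[algC]_n,
        (forall e : A, (U *m rho e <= U)%MS) -> (U == 0 :> 'M[algC]_n) || row_full U].

Definition Emod_iso (A : falgType algC) (n m : nat)
  (rho : A -> 'M[algC]_n) (sigma : A -> 'M[algC]_m) : Prop :=
  exists P : 'M[algC]_(n, m),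
    [/\ row_free P, row_full P & forall e : A, rho e *m P = P *m sigma e].

(* iota-stability: a linear iso iota_i = (v |-> v *m J) with
   iota_i(e v) = iota(e) iota_i(v). *)
Definition iota_twist (A : falgType algC) (iota : 'AEnd(A)) (n : nat)
  (rho : A -> 'M[algC]_n) (J : 'M[algC]_n) : Prop :=
  J \in unitmx /\ forall e : A, rho e *m J = J *m rho (iota e).

(* Main.v *)
Require Import Defs.
From HB Require Import structures.
From mathcomp Require Import all_boot all_order all_algebra all_fingroup all_field.
From mathcomp Require Import algC.
From mathcomp Require Import ring.
From mathcomp Require Import mxrepresentation.
Import GRing.Theory Num.Theory.
Local Open Scope ring_scope.
Import VectorInternalTheory.
Set Warnings "-notation-overridden,-ambiguous-paths".
Set Implicit Arguments. Unset Strict Implicit. Unset Printing Implicit Defensive.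

Section Main.
Variables (gT : finGroupType) (F : gT -> gT) (F_inj : injective F)
  (F_morph : {morph F : x y / (x * y)%g})
  (A : falgType algC) (E : gT -> {vspace A}).
Hypotheses (E_sum : (\sum_(w : gT) E w)%VS = fullv)
  (E_direct : directv (\sum_(w : gT) E w))
  (E_dim : forall w : gT, \dim (E w) = 1%N)
  (E_mul : forall w y : gT, (E w * E y)%VS = E (w * y)%g).
Variables (b : gT -> A).
Hypotheses (b_in : forall w : gT, b w \in E w)
  (b_neq0 : forall w : gT, b w != 0).
Variable (iota : 'AEnd(A)).
Hypotheses (iota_inj : lker iota = 0%VS)
  (iota_grad : forall w : gT, (iota @: E w)%VS = E (F w)).
Variables (r' : nat) (n : 'I_r' -> nat) (rho : forall i : 'I_r', A -> 'M[algC]_(n i)).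
Hypotheses (rho_simple : forall i, is_simple_Emodule (rho i))
  (rho_all : forall (m : nat) (sigma : A -> 'M[algC]_m),
      is_simple_Emodule sigma -> exists i, Emod_iso (rho i) sigma)
  (rho_distinct : forall i j, Emod_iso (rho i) (rho j) -> i = j).
Variable (S : {set 'I_r'}).
Hypothesis (S_def : forall i, i \in S <-> exists J, iota_twist iota (rho i) J).
Variable (J : forall i : 'I_r', 'M[algC]_(n i)).
Hypothesis (J_twist : forall i, i \in S -> iota_twist iota (rho i) (J i)).
Variable (Gbar : {set gT}).
Hypotheses (Gbar_eff : forall x, x \in Gbar -> effective (invF F_inj) b iota x)
  (Gbar_rep : forall x, effective (invF F_inj) b iota x ->
      exists! g, g \in Gbar /\ g \in twclass (invF F_inj) x).
Lemma Eline w : E w = <[b w]>%VS.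
Proof. by apply/eqP; rewrite eq_sym eqEdim -memvE b_in E_dim dim_vline b_neq0. Qed.

Lemma inE_scal w x : x \in E w -> exists k, x = k *: b w.
Proof. by rewrite Eline => /vlineP. Qed.

Lemma memM w y x z : x \in E w -> z \in E y -> x * z \in E (w * y)%g.
Proof. by move=> hx hz; rewrite -E_mul; apply: memv_mul. Qed.

Lemma bM_neq0 w y : b w * b y != 0.
Proof.
apply/eqP => h; have := E_dim (w * y)%g.
by rewrite -E_mul !Eline prodv_line h dim_vline eqxx.
Qed.

Lemma coefU (c : gT -> algC) : \sum_w c w *: b w = 0 -> forall w, c w = 0.
Proof.
move=> h w; have /directv_sum_independent H := E_direct.
have := H (fun w => c w *: b w) (fun w _ => memvZ _ (b_in w)) h w isT.
by move/eqP; rewrite scaler_eq0 (negPf (b_neq0 w)) orbF => /eqP.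
Qed.

Definition pi w : 'End(A) := sumv_pi_for (esym E_sum) w.
Definition cf w (a : A) : algC := coord [tuple b w] 0 (pi w a).

Lemma cf_expand a : a = \sum_w cf w a *: b w.
Proof.
rewrite -{1}(@sumv_pi_sum _ _ _ xpredT E a _ (esym E_sum)) ?memvf //.
apply: eq_bigr => w _; rewrite /cf.
have hw : pi w a \in <<[tuple b w]>>%VS.
  by rewrite span_seq1 -Eline /pi memv_sum_pi.
rewrite {1}(coord_span hw) big_ord1; congr (_ *: _).
Qed.

Lemma cf_sum (c : gT -> algC) g : cf g (\sum_w c w *: b w) = c g.
Proof.
set a := \sum_w _; have h : \sum_w (cf w a - c w) *: b w = 0.
  under eq_bigr do rewrite scalerBl.
  by rewrite sumrB -cf_expand subrr.
by have := coefU h g; move=> /= /eqP; rewrite subr_eq0 => /eqP.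
Qed.

Lemma cf_linear g k x y : cf g (k *: x + y) = k * cf g x + cf g y.
Proof. by rewrite /cf !linearP. Qed.
Lemma cfD g x y : cf g (x + y) = cf g x + cf g y.
Proof. by rewrite -[x]scale1r cf_linear mul1r scale1r. Qed.
Lemma cfZ g k x : cf g (k *: x) = k * cf g x.
Proof. by rewrite /cf !linearZ. Qed.
Lemma cf0 g : cf g 0 = 0.
Proof. by rewrite /cf !linear0. Qed.
Lemma cf_sumr g (I : finType) (h : I -> A) : cf g (\sum_i h i) = \sum_i cf g (h i).
Proof. by rewrite /cf !linear_sum. Qed.

Lemma cfZb g v k : cf g (k *: b v) = if g == v then k else 0.
Proof.
have -> : k *: b v = \sum_w (if w == v then k else 0) *: b w.
  rewrite (bigD1 v) //= eqxx big1 ?addr0 // => w /negPf ->; exact: scale0r.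
by rewrite cf_sum.
Qed.

Lemma cfb g v : cf g (b v) = (g == v)%:R.
Proof. by rewrite -[b v]scale1r cfZb; case: eqP. Qed.
Lemma one_E1 : (1 : A) \in E 1%g.
Proof.
have h11 := memM (b_in 1%g) (b_in 1%g); rewrite mulg1 in h11.
have [k hk] := inE_scal h11.
have k0 : k != 0.
  by apply: contraNneq (bM_neq0 1%g 1%g) => k0; rewrite hk k0 scale0r.
pose e := k^-1 *: b 1%g.
have ee : e * e = e.
  rewrite /e -scalerAl -scalerAr hk !scalerA; congr (_ *: _); by field.
have eb y : e * b y = b y.
  have hy : e * b y \in E y.
    by rewrite /e -scalerAl memvZ //; have := memM (b_in 1%g) (b_in y); rewrite mul1g.
  have [m hm] := inE_scal hy.
  have m0 : m != 0.
    apply: contraNneq (bM_neq0 1%g y) => m0.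
    move: hm; rewrite m0 scale0r /e -scalerAl => /eqP.
    by rewrite scaler_eq0 invr_eq0 (negPf k0) /= => /eqP ->.
  have : m *: b y = (m * m) *: b y.
    by rewrite -hm -ee -mulrA hm -scalerAr hm scalerA.
  move/eqP; rewrite -subr_eq0 -scalerBl scaler_eq0 (negPf (b_neq0 y)) orbF.
  rewrite subr_eq0 -{1}[m]mulr1 => /eqP /(mulfI m0) h1.
  by rewrite hm -h1 scale1r.
have ea a : e * a = a.
  rewrite [RHS](cf_expand a) [a in e * a](cf_expand a) mulr_sumr; apply: eq_bigr => w _.
  by rewrite -scalerAr eb.
have <- : e = 1 by rewrite -[e]mulr1 ea.
by rewrite /e memvZ.
Qed.

Lemma E1line : E 1%g = <[1]>%VS.
Proof. by apply/eqP; rewrite eq_sym eqEdim -memvE one_E1 E_dim dim_vline oner_neq0. Qed.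

Lemma inE1 x : x \in E 1%g -> exists k, x = k *: 1.
Proof. by rewrite E1line => /vlineP. Qed.

Lemma unit_b v : b v \is a GRing.unit /\ (b v)^-1 \in E v^-1%g.
Proof.
have h1 := memM (b_in v) (b_in v^-1%g); rewrite mulgV in h1.
have h2 := memM (b_in v^-1%g) (b_in v); rewrite mulVg in h2.
have [k1 hk1] := inE1 h1; have [k2 hk2] := inE1 h2.
have k10 : k1 != 0 by apply: contraNneq (bM_neq0 v v^-1%g) => k0; rewrite hk1 k0 scale0r.
have k20 : k2 != 0 by apply: contraNneq (bM_neq0 v^-1%g v) => k0; rewrite hk2 k0 scale0r.
pose y := k1^-1 *: b v^-1%g; pose y' := k2^-1 *: b v^-1%g.
have hy : b v * y = 1 by rewrite /y -scalerAr hk1 scalerA mulVf // scale1r.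
have hy' : y' * b v = 1 by rewrite /y' -scalerAl hk2 scalerA mulVf // scale1r.
have yy : y' = y by rewrite -[y']mulr1 -hy mulrA hy' mul1r.
have u : b v \is a GRing.unit by apply/unitrP; exists y; split=> //; rewrite -yy.
split=> //; have -> : (b v)^-1 = y by rewrite -[y](mulKr u) hy mulr1.
by rewrite memvZ.
Qed.

Lemma unitE v x : x \in E v -> x != 0 -> x \is a GRing.unit /\ x^-1 \in E v^-1%g.
Proof.
move=> hx x0; have [k hk] := inE_scal hx.
have k0 : k != 0 by apply: contraNneq x0 => k0; rewrite hk k0 scale0r.
have [u hu] := unit_b v.
have ku : k \is a GRing.unit by rewrite unitfE.
by rewrite hk scaler_unit // invrZ // memvZ.
Qed.

Lemma memE_mul1 v x y : x \in E v -> y \in E v^-1%g -> exists k, x * y = k *: 1.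
Proof. by move=> hx hy; apply: inE1; have := memM hx hy; rewrite mulgV. Qed.

Notation iv := (iota^-1)%VF.

Lemma iota_lker : lker iota == 0%VS. Proof. by rewrite iota_inj. Qed.
Lemma ivK : cancel iota iv. Proof. exact: lker0_lfunK iota_lker. Qed.
Lemma ivVK : cancel iv iota. Proof. exact: lker0_lfunVK iota_lker. Qed.
Lemma ivM x y : iv (x * y) = iv x * iv y.
Proof. by rewrite -{1}[x]ivVK -{1}[y]ivVK -rmorphM ivK. Qed.
Lemma iv1 : iv 1 = 1.
Proof. by rewrite -{1}(rmorph1 iota) ivK. Qed.

Lemma iv_in z x : x \in E z -> iv x \in E (invF F_inj z).
Proof.
have := iota_grad (invF F_inj z); rewrite f_invF => h.
rewrite -h => /memv_imgP [u hu ->]; by rewrite ivK.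
Qed.

Lemma iota_in z x : x \in E z -> iota x \in E (F z).
Proof. by move=> hx; rewrite -iota_grad memv_img. Qed.

Lemma iv_neq0 x : x != 0 -> iv x != 0.
Proof. by apply: contraNneq => h; rewrite -[x]ivVK h linear0. Qed.

Lemma invF1 : invF F_inj 1%g = 1%g.
Proof. by apply: F_inj; rewrite f_invF; apply: (mulIg (F 1%g)); rewrite -F_morph !mul1g. Qed.
Section ModLemmas.
Variables (m : nat) (sg : A -> 'M[algC]_m).
Hypothesis hs : is_Emodule sg.

Lemma modL c a a' : sg (c *: a + a') = c *: sg a + sg a'.
Proof. by case: hs. Qed.
Lemma mod1 : sg 1 = 1%:M. Proof. by case: hs. Qed.
Lemma modM a a' : sg (a * a') = sg a' *m sg a. Proof. by case: hs. Qed.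
Lemma modD a a' : sg (a + a') = sg a + sg a'.
Proof. by rewrite -[a in LHS]scale1r modL scale1r. Qed.
Lemma mod0 : sg 0 = 0.
Proof. have := modD 0 0; rewrite addr0 -{1}[sg 0]addr0 => /addrI h; by rewrite -h. Qed.
Lemma modZ c a : sg (c *: a) = c *: sg a.
Proof. by rewrite -[c *: a]addr0 modL mod0 addr0. Qed.
Lemma mod_sum (I : finType) (f : I -> A) : sg (\sum_i f i) = \sum_i sg (f i).
Proof. exact: (big_morph sg modD mod0). Qed.
Lemma mod_unitV u : u \is a GRing.unit -> sg u *m sg u^-1 = 1%:M.
Proof. by move=> hu; rewrite -modM mulVr // mod1. Qed.
Lemma mod_unitV' u : u \is a GRing.unit -> sg u^-1 *m sg u = 1%:M.
Proof. by move=> hu; rewrite -modM mulrV // mod1. Qed.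
End ModLemmas.

Lemma simple_mod m (sg : A -> 'M[algC]_m) : is_simple_Emodule sg -> is_Emodule sg.
Proof. by case. Qed.

Lemma Schur1 m1 m2 (s1 : A -> 'M[algC]_m1) (s2 : A -> 'M[algC]_m2) (Y : 'M_(m1, m2)) :
  is_simple_Emodule s1 -> is_simple_Emodule s2 ->
  (forall e, s1 e *m Y = Y *m s2 e) -> Y = 0 \/ (row_free Y /\ row_full Y).
Proof.
move=> [h1 _ sim1] [h2 _ sim2] hY.
have [->|Y0] := eqVneq Y 0; first by left.
right; split.
  rewrite -kermx_eq0.
  have : forall e, (kermx Y *m s1 e <= kermx Y)%MS.
    by move=> e; apply/sub_kermxP; rewrite -mulmxA hY mulmxA mulmx_ker mul0mx.
  move/sim1 => /orP [//|]; rewrite -sub1mx => /sub_kermxP; rewrite mul1mx => h.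
  by rewrite h eqxx in Y0.
have : forall e, (<<Y>>%MS *m s2 e <= <<Y>>)%MS.
  by move=> e; rewrite (eqmxMr _ (genmxE Y)) genmxE -hY submxMl.
move/sim2 => /orP [|].
  by rewrite -submx0 genmxE submx0 (negPf Y0).
by rewrite /row_full genmxE.
Qed.

Lemma Schur2 m (s : A -> 'M[algC]_m) (Y : 'M_m) :
  is_simple_Emodule s -> (forall e, s e *m Y = Y *m s e) -> exists l, Y = l%:M.
Proof.
move=> hs hY.
have : size (char_poly Y) != 1%N by rewrite size_char_poly; case: hs => _ m0 _; rewrite eqSS -lt0n.
case/closed_rootP => l; rewrite -eigenvalue_root_char => /eigenvalueP [v hv v0].
exists l; apply/eqP; rewrite -subr_eq0; apply/eqP.
have : forall e, s e *m (Y - l%:M) = (Y - l%:M) *m s e.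
  by move=> e; rewrite mulmxBr mulmxBl hY scalar_mxC.
case/(Schur1 hs hs) => [//|[fr _]].
have : v *m (Y - l%:M) = 0 *m (Y - l%:M) by rewrite mulmxBr hv mul_mx_scalar subrr mul0mx.
by move/(row_free_inj fr) => h; rewrite h eqxx in v0.
Qed.

Definition avg m1 m2 (s1 : A -> 'M[algC]_m1) (s2 : A -> 'M[algC]_m2) (X : 'M_(m1, m2)) :=
  \sum_w s1 (b w)^-1 *m X *m s2 (b w).

Lemma line_term m1 m2 (s1 : A -> 'M[algC]_m1) (s2 : A -> 'M[algC]_m2) X v x :
  is_Emodule s1 -> is_Emodule s2 -> x \in E v -> x != 0 ->
  s1 x^-1 *m X *m s2 x = s1 (b v)^-1 *m X *m s2 (b v).
Proof.
move=> h1 h2 hx x0; have [k hk] := inE_scal hx.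
have k0 : k != 0 by apply: contraNneq x0 => k0; rewrite hk k0 scale0r.
have [u _] := unit_b v.
rewrite hk invrZ ?unitfE // (modZ h1) (modZ h2) -scalemxAl -scalemxAl -scalemxAr scalerA mulVf // scale1r //.
Qed.

Lemma avg_inter m1 m2 (s1 : A -> 'M[algC]_m1) (s2 : A -> 'M[algC]_m2) X e :
  is_Emodule s1 -> is_Emodule s2 -> s1 e *m avg s1 s2 X = avg s1 s2 X *m s2 e.
Proof.
move=> h1 h2.
suff hb : forall y, s1 (b y) *m avg s1 s2 X = avg s1 s2 X *m s2 (b y).
  rewrite (cf_expand e) (mod_sum h1) (mod_sum h2) mulmx_suml mulmx_sumr.
  by apply: eq_bigr => y _; rewrite (modZ h1) (modZ h2) -scalemxAl hb scalemxAr.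
move=> y; have [uy iy] := unit_b y.
rewrite /avg mulmx_sumr mulmx_suml.
rewrite [RHS](reindex_inj (mulgI y^-1)%g) /=.
apply: eq_bigr => w _.
have [uw iw] := unit_b w.
pose x := (b y)^-1 * b w.
have xu : x \is a GRing.unit by rewrite /x unitrMl // unitrV.
have xin : x \in E (y^-1 * w)%g by apply: memM.
have x0 : x != 0 by apply: contraTneq xu => ->; rewrite unitr0.
rewrite -(line_term X h1 h2 xin x0).
have -> : b w = b y * x by rewrite /x mulVKr.
rewrite (modM h2) !mulmxA; congr (_ *m _).
congr (_ *m _ *m _); rewrite -(modM h1); congr (s1 _).
by rewrite invrM // mulrVK.
Qed.
Lemma card_neq0 : (#|gT|%:R : algC) != 0.
Proof. by rewrite pnatr_eq0 -lt0n; apply/card_gt0P; exists 1%g. Qed.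

Lemma n_gt0 i : (0 < n i)%N. Proof. by case: (rho_simple i). Qed.
Lemma n_neq0 i : ((n i)%:R : algC) != 0.
Proof. by rewrite pnatr_eq0 -lt0n n_gt0. Qed.

Lemma tr_delta m (q k : 'I_m) : \tr (delta_mx q k : 'M[algC]_m) = (q == k)%:R.
Proof.
rewrite /mxtrace (bigD1 q) //= mxE eqxx /= big1 ?addr0 // => t /negPf tq.
by rewrite mxE tq.
Qed.

Lemma tri_delta a m1 m2 c (P : 'M[algC]_(a, m1)) (Q : 'M[algC]_(m2, c)) q k p l :
  (P *m delta_mx q k *m Q) p l = P p q * Q k l.
Proof.
have h1 c' : (P *m delta_mx q k) p c' = P p q * (c' == k)%:R.
  rewrite mxE (bigD1 q) //= mxE eqxx /= big1 ?addr0 // => t /negPf tq.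
  by rewrite mxE tq mulr0.
rewrite mxE (bigD1 k) //= h1 eqxx mulr1 big1 ?addr0 // => t /negPf tk.
by rewrite h1 tk mulr0 mul0r.
Qed.

Lemma avg_trace m (s : A -> 'M[algC]_m) X : is_Emodule s ->
  \tr (avg s s X) = #|gT|%:R * \tr X.
Proof.
move=> hs; rewrite /avg raddf_sum /=.
rewrite (eq_bigr (fun _ => \tr X)) ?sumr_const ?mulr_natl ?card_ord //.
move=> w _; have [u _] := unit_b w.
by rewrite mxtrace_mulC mulmxA (mod_unitV hs u) mul1mx.
Qed.

Lemma orth_ne i j X : i != j -> avg (rho i) (rho j) X = 0.
Proof.
move=> ij; have h e := avg_inter X e (simple_mod (rho_simple i)) (simple_mod (rho_simple j)).
case: (Schur1 (rho_simple i) (rho_simple j) h) => [//|[fr fu]].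
have : Emod_iso (rho i) (rho j).
  by exists (avg (rho i) (rho j) X); split.
by move/rho_distinct => e; rewrite e eqxx in ij.
Qed.

Lemma orth_eq i X : avg (rho i) (rho i) X = ((#|gT|%:R * \tr X) / (n i)%:R)%:M.
Proof.
have h e := avg_inter X e (simple_mod (rho_simple i)) (simple_mod (rho_simple i)).
have [l hl] := Schur2 (rho_simple i) h.
have := avg_trace X (simple_mod (rho_simple i)).
rewrite hl mxtrace_scalar => <-.
by rewrite -[l *+ _]mulr_natr mulfK ?n_neq0.
Qed.

Definition s i (Z : 'M[algC]_(n i)) : A :=
  ((n i)%:R / #|gT|%:R) *: \sum_w \tr (rho i (b w)^-1 *m Z) *: b w.

Lemma s_entry i j (Z : 'M[algC]_(n i)) k l :
  rho j (s Z) k l = (n i)%:R / #|gT|%:R *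
    \sum_p \sum_q Z q p * (avg (rho i) (rho j) (delta_mx q k)) p l.
Proof.
have hj := simple_mod (rho_simple j).
rewrite /s (modZ hj) (mod_sum hj) mxE; congr (_ * _).
rewrite summxE.
under eq_bigr do rewrite (modZ hj) mxE /mxtrace mulr_suml.
rewrite exchange_big /=; apply: eq_bigr => p _.
under eq_bigr do rewrite mxE mulr_suml.
rewrite exchange_big /=; apply: eq_bigr => q _.
rewrite /avg summxE mulr_sumr; apply: eq_bigr => w _.
by rewrite tri_delta mulrCA mulrA.
Qed.

Lemma s_other i j Z : i != j -> rho j (@s i Z) = 0.
Proof.
move=> ij; apply/matrixP => k l; rewrite s_entry mxE.
rewrite big1 ?mulr0 // => p _; rewrite big1 // => q _.
by rewrite orth_ne // mxE mulr0.
Qed.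

Lemma s_self i Z : rho i (@s i Z) = Z.
Proof.
apply/matrixP => k l; rewrite s_entry.
under eq_bigr do under eq_bigr do rewrite orth_eq tr_delta mxE.
rewrite (bigD1 l) //= (bigD1 k) //= !eqxx /= big1; last first.
  by move=> q /negPf qk; rewrite qk !mulr0 mul0r mulr0.
rewrite big1; last first.
  move=> p /negPf pl; rewrite big1 // => q _.
  by rewrite pl mulr0n mulr0.
rewrite !addr0 mulr1 mulr1n mulrC mulrA -mulrA.
have h : (#|gT|%:R / (n i)%:R) * ((n i)%:R / #|gT|%:R) = 1 :> algC.
  by rewrite mulrC mulrA divfK ?card_neq0 // mulfV ?n_neq0.
by rewrite -mulrA h mulr1.
Qed.
Local Notation dA := (dim A).

Definition mxf (f : A -> A) : 'M[algC]_dA := \matrix_(k < dA) v2r (f (@r2v _ A 'e_k)).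

Lemma mxf_mul (f : A -> A) v :
  (forall x y, f (x + y) = f x + f y) -> (forall c x, f (c *: x) = c *: f x) ->
  v *m mxf f = v2r (f (r2v v)).
Proof.
move=> fD fZ.
have f0 : f 0 = 0 by have := fZ 0 0; rewrite !scale0r.
rewrite mulmx_sum_row [v in RHS]row_sum_delta !linear_sum /= (big_morph f fD f0) linear_sum /=.
apply: eq_bigr => i _; rewrite rowK.
have -> : r2v (v 0 i *: 'e_i) = v 0 i *: (@r2v _ A 'e_i) by rewrite linearZ.
by rewrite fZ linearZ.
Qed.

Definition reg (e : A) : 'M[algC]_dA := mxf (fun x => e * x).

Lemma reg_mul v e : v *m reg e = v2r (e * r2v v).
Proof. by apply: mxf_mul => [x y|c x]; rewrite ?mulrDr ?scalerAr. Qed.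

Lemma mx_ext (M M' : 'M[algC]_dA) : (forall v : 'rV_dA, v *m M = v *m M') -> M = M'.
Proof. by move=> h; apply/row_matrixP => k; rewrite !rowE h. Qed.

Lemma reg_Emod : is_Emodule reg.
Proof.
split.
- move=> c a a'; apply: mx_ext => v.
  by rewrite mulmxDr -scalemxAr !reg_mul mulrDl -scalerAl !linearP.
- by apply: mx_ext => v; rewrite reg_mul mul1r r2vK mulmx1.
- by move=> a a'; apply: mx_ext => v; rewrite mulmxA !reg_mul v2rK mulrA.
Qed.

Lemma reg_v2r1 x : v2r 1 *m reg x = v2r x.
Proof. by rewrite reg_mul v2rK mulr1. Qed.

Definition modmx (U : 'M[algC]_dA) := forall e, (U *m reg e <= U)%MS.

Lemma modmx_mul U (u : 'rV[algC]_dA) e : modmx U -> (u <= U)%MS -> (u *m reg e <= U)%MS.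
Proof. by move=> hU hu; apply: submx_trans (hU e); apply: submxMr. Qed.

Lemma proj_ex (U : 'M[algC]_dA) : exists p : 'M[algC]_dA,
  (forall u : 'rV_dA, (u <= U)%MS -> u *m p = u) /\ (forall v : 'rV_dA, (v *m p <= U)%MS).
Proof.
exists (proj_mx U U^C%MS); split => [u hu|v]; first by rewrite proj_mx_id ?capmx_compl.
exact: proj_mx_sub.
Qed.

Lemma maschke U : modmx U -> exists Pi : 'M[algC]_dA,
  [/\ forall e, reg e *m Pi = Pi *m reg e,
      forall u : 'rV_dA, (u <= U)%MS -> u *m Pi = u
    & forall v : 'rV_dA, (v *m Pi <= U)%MS].
Proof.
move=> hU; have [p0 [p0id p0sub]] := proj_ex U.
exists ((#|gT|%:R)^-1 *: avg reg reg p0); split.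
- by move=> e; rewrite -scalemxAr -scalemxAl avg_inter //; apply: reg_Emod.
- move=> u hu; rewrite -scalemxAr /avg mulmx_sumr.
  rewrite (eq_bigr (fun _ => u)) ?sumr_const ?card_ord.
    by rewrite -scaler_nat scalerA mulVf ?card_neq0 // scale1r.
  move=> w _; have [uw _] := unit_b w.
  rewrite !mulmxA p0id ?modmx_mul //.
  by rewrite -mulmxA (mod_unitV' reg_Emod uw) mulmx1.
- move=> v; rewrite -scalemxAr scalemx_sub // /avg mulmx_sumr summx_sub // => w _.
  by rewrite !mulmxA modmx_mul // p0sub.
Qed.
Definition killed (U : 'M[algC]_dA) :=
  forall v : 'rV_dA, (v <= U)%MS -> forall i, rho i (r2v v) = 0.

Section SubRep.
Variable U : 'M[algC]_dA.
Hypothesis hU : modmx U.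

Definition rU (e : A) : 'M[algC]_(\rank U) := in_submod U (val_submod 1%:M *m reg e).

Lemma modmx_sub m (W : 'M[algC]_(m, dA)) e : (W <= U)%MS -> (W *m reg e <= U)%MS.
Proof. by move=> h; apply: submx_trans (hU e); apply: submxMr. Qed.

Lemma in_submodJ' m (W : 'M_(m, dA)) x :
  (W <= U)%MS -> in_submod U (W *m reg x) = in_submod U W *m rU x.
Proof.
move=> sWU; rewrite mulmxA; congr (in_submod _ _).
by rewrite mulmxA -val_submodE in_submodK.
Qed.

Lemma val_submodJ' m (W : 'M_(m, \rank U)) x :
  val_submod (W *m rU x) = val_submod W *m reg x.
Proof.
rewrite 2!(mulmxA W) -val_submodE in_submodK //.
by apply: modmx_sub; apply: val_submodP.
Qed.

Lemma rU_Emod : is_Emodule rU.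
Proof.
have [hl h1 hm] := reg_Emod.
split.
- by move=> c a a'; rewrite /rU hl mulmxDr -scalemxAr linearP.
- by rewrite /rU h1 mulmx1 val_submodK.
- move=> a a'; rewrite /rU hm mulmxA in_submodJ' //.
  by apply: modmx_sub; apply: val_submodP.
Qed.
End SubRep.

Lemma noP r : forall U : 'M[algC]_dA, modmx U -> U != 0 -> killed U ->
  (\rank U <= r)%N -> False.
Proof.
elim: r => [|r IH] U hU U0 kU.
  by rewrite leqn0 mxrank_eq0 (negPf U0).
move=> rk.
have sim : is_simple_Emodule (rU U).
  split; first exact: rU_Emod.
    by rewrite lt0n mxrank_eq0.
  move=> W hW; case W0: (W == 0) => //=; case Wf: (row_full W) => //.
  exfalso; apply: (IH <<val_submod W>>%MS).
  - move=> e; rewrite (eqmxMr _ (genmxE _)) genmxE -val_submodJ' //.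
    by rewrite val_submodS.
  - by rewrite -mxrank_eq0 mxrank_gen mxrank_eq0 val_submod_eq0 W0.
  - move=> v; rewrite genmxE => hv; apply: kU.
    by apply: submx_trans hv _; apply: val_submodP.
  - rewrite mxrank_gen /val_submod /= mxrankMfree ?row_base_free //.
    rewrite -ltnS; apply: leq_trans rk; rewrite ltn_neqAle rank_leq_col andbT.
    by move: Wf; rewrite /row_full => ->.
have [i [P [Pfr Pfu hP]]] := rho_all sim.
have [Q hQ] := row_fullP Pfu.
have kill x : (forall i, rho i x = 0) -> forall u : 'rV_dA, (u <= U)%MS -> u *m reg x = 0.
  move=> hx u hu.
  have h0 : rU U x = 0.
    by rewrite -[rU U x]mul1mx -hQ -mulmxA -hP hx mul0mx mulmx0.
  have := val_submodJ' hU (1%:M) x; rewrite mul1mx h0 linear0 => /esym h.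
  have : (u <= val_submod (1%:M : 'M_(\rank U)))%MS by rewrite val_submod1.
  by case/submxP => w ->; rewrite -mulmxA h mulmx0.
have [u hu u0] : exists2 u : 'rV_dA, (u <= U)%MS & u != 0 by apply/rowV0Pn.
have [Pi [hPi1 hPi2 hPi3]] := maschke hU.
have ku := kU u hu.
apply/negP: u0; apply/negPn/eqP.
rewrite -(hPi2 _ hu) -[u in u *m Pi]r2vK -reg_v2r1. have e1 := mulmxA (v2r (1:A)) (reg (r2v u)) Pi. rewrite -e1 hPi1.
have e2 := mulmxA (v2r (1:A)) Pi (reg (r2v u)); rewrite e2.
exact: (kill _ ku _ (hPi3 (v2r 1))).
Qed.

Lemma Phi_inj a : (forall i, rho i a = 0) -> a = 0.
Proof.
move=> ha; apply/eqP; apply/negPn/negP => a0.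
pose U0 := mxf (fun x => x * a).
have hU0 v : v *m U0 = v2r (r2v v * a).
  by apply: mxf_mul => [x y|c x]; rewrite ?mulrDl ?scalerAl.
apply: (noP (r := \rank U0) (U := U0)) => //.
- move=> e; apply/row_subP => k; rewrite rowE mulmxA hU0 reg_mul v2rK mulrA.
  by rewrite -[e * r2v _]v2rK -hU0 submxMl.
- apply/eqP => U00; have := hU0 (v2r 1); rewrite U00 mulmx0 v2rK mul1r => /esym h.
  by move: a0; rewrite -[a]v2rK h linear0 eqxx.
- move=> v /submxP [w ->] i; rewrite hU0 v2rK.
  by rewrite (modM (simple_mod (rho_simple i))) ha mul0mx.
Qed.
Local Notation Finv := (invF F_inj).

Definition theta z e := iv (b z) * e * (b z)^-1.

Lemma theta_in z v x : x \in E v -> theta z x \in E (twact Finv z v).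
Proof.
move=> hx; rewrite /theta /twact; apply: memM; last exact: (unit_b z).2.
by apply: memM => //; apply: iv_in.
Qed.

Lemma thetaD z x y : theta z (x + y) = theta z x + theta z y.
Proof. by rewrite /theta mulrDr mulrDl. Qed.
Lemma thetaZ z c x : theta z (c *: x) = c *: theta z x.
Proof. by rewrite /theta -scalerAr -scalerAl. Qed.

Definition isT (f : A -> algC) := forall x y, f (x * y) = f (y * iota x).
Definition islin (f : A -> algC) :=
  (forall x y, f (x + y) = f x + f y) /\ (forall c x, f (c *: x) = c * f x).

Lemma lin0 f : islin f -> f 0 = 0.
Proof. by case=> _ fZ; have := fZ 0 0; rewrite scale0r mul0r. Qed.

Lemma lin_expand f a : islin f -> f a = \sum_w cf w a * f (b w).
Proof.
move=> hf; have [fD fZ] := hf; rewrite {1}(cf_expand a).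
rewrite (big_morph f fD (lin0 hf)); apply: eq_bigr => w _; exact: fZ.
Qed.

Lemma isT_theta f z e : isT f -> f (theta z e) = f e.
Proof.
move=> hf; rewrite /theta -mulrA hf ivVK.
by have [u _] := unit_b z; rewrite mulrVK.
Qed.

Lemma theta_isT f : islin f -> (forall z e, f (theta z e) = f e) -> isT f.
Proof.
move=> hf ht x y; have [fD fZ] := hf.
have l1 : islin (fun x => f (x * y)).
  by split=> [a a'|c a]; rewrite ?mulrDl ?fD // -scalerAl fZ.
have l2 : islin (fun x => f (y * iota x)).
  by split=> [a a'|c a]; rewrite ?rmorphD ?mulrDr ?fD // linearZ -scalerAr fZ.
rewrite (lin_expand x l1) (lin_expand x l2); apply: eq_bigr => z _; congr (_ * _).
have [mu hmu] := inE_scal (iota_in (b_in z)).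
have mu0 : mu != 0.
  apply: contraNneq (b_neq0 z) => m0; apply/eqP.
  by rewrite -[b z]ivK hmu m0 scale0r linear0.
have hiv : iv (b (F z)) = mu^-1 *: b z.
  by rewrite -[b z]ivK hmu linearZ /= scalerA mulVf // scale1r.
rewrite -[RHS](ht (F z)) /theta hiv hmu.
have [u _] := unit_b (F z).
by rewrite -!scalerAr -!scalerAl !scalerA mulfV // scale1r mulrA mulrK.
Qed.

Definition effb x := [forall y, (y \in twstab Finv x) ==> (iv (b y) * b x == b x * b y)].
Lemma effbP x : reflect (effective Finv b iota x) (effb x).
Proof.
apply: (iffP forallP) => [h y hy|h y]; first by have := h y; rewrite hy => /eqP.
by apply/implyP => hy; apply/eqP; apply: h.
Qed.

Lemma twact1 x : twact Finv 1%g x = x.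
Proof. by rewrite /twact invF1 mul1g invg1 mulg1. Qed.

Lemma T_eval0 f : islin f -> isT f -> (forall g, g \in Gbar -> f (b g) = 0) ->
  forall a, f a = 0.
Proof.
move=> hf hT h0.
suff hb : forall u, f (b u) = 0.
  by move=> a; rewrite (lin_expand a hf) big1 // => w _; rewrite hb mulr0.
move=> u; have [fD fZ] := hf.
case: (boolP (effb u)) => [/effbP eff|neff].
  have [g [[gG /imsetP [z _ hg]] _]] := Gbar_rep eff.
  have [k hk] := inE_scal (theta_in z (b_in u)).
  by rewrite -(isT_theta z (b u) hT) hk -hg fZ (h0 _ gG) mulr0.
have [z hz hne] : exists2 z, z \in twstab Finv u & iv (b z) * b u != b u * b z.
  move: neff; rewrite negb_forall => /existsP [z]; rewrite negb_imply => /andP [h1 h2].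
  by exists z.
have hin := theta_in z (b_in u).
have := hz; rewrite inE => /eqP hzu; rewrite hzu in hin.
have [l hl] := inE_scal hin.
have : f (b u) = l * f (b u) by rewrite -fZ -hl isT_theta.
move/eqP; rewrite -subr_eq0 -{1}[f (b u)]mul1r -mulrBl mulf_eq0 => /orP [|/eqP //].
rewrite subr_eq0 => /eqP l1; move: hl; rewrite -l1 scale1r /theta => h.
have [uz _] := unit_b z.
have e : iv (b z) * b u = b u * b z by rewrite -[in RHS]h mulrVK.
by rewrite e eqxx in hne.
Qed.
Lemma theta_comp z u e : theta z (theta u e) = theta (z * u)%g e.
Proof.
have [uz iz] := unit_b z; have [uu iu] := unit_b u.
have [c hc] := inE_scal (memM (b_in z) (b_in u)).
have c0 : c != 0 by apply: contraNneq (bM_neq0 z u) => c0; rewrite hc c0 scale0r.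
have [ubzu _] := unit_b (z * u)%g.
have -> : theta z (theta u e) = iv (b z * b u) * e * (b z * b u)^-1.
  by rewrite /theta ivM invrM // !mulrA.
rewrite hc linearZ invrZ ?unitfE // /theta.
by rewrite -!scalerAr -!scalerAl scalerA mulVf // scale1r.
Qed.

Definition fg g e := \sum_z cf g (theta z e).

Lemma fg_lin g : islin (fg g).
Proof.
split=> [x y|c x]; rewrite /fg.
  by rewrite -big_split; apply: eq_bigr => z _; rewrite thetaD cfD.
by rewrite mulr_sumr; apply: eq_bigr => z _; rewrite thetaZ cfZ.
Qed.

Lemma fg_T g : isT (fg g).
Proof.
apply: theta_isT; first exact: fg_lin.
move=> u e; rewrite /fg; under eq_bigr do rewrite theta_comp.
by rewrite [RHS](reindex_inj (mulIg u)).
Qed.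

Lemma fg_off g g' : g \in Gbar -> g' \in Gbar -> g != g' -> fg g (b g') = 0.
Proof.
move=> gG g'G gg'; rewrite /fg big1 // => z _.
have [k hk] := inE_scal (theta_in z (b_in g')).
rewrite hk cfZb; case: eqP => // e; exfalso.
have [x [_ ux]] := Gbar_rep (Gbar_eff g'G).
have c1 : g \in twclass Finv g' by apply/imsetP; exists z.
have c2 : g' \in twclass Finv g' by apply/imsetP; exists 1%g; rewrite ?twact1.
have e1 := ux g (conj gG c1); have e2 := ux g' (conj g'G c2).
by rewrite -e1 -e2 eqxx in gg'.
Qed.

Lemma fg_diag g : g \in Gbar -> fg g (b g) != 0.
Proof.
move=> gG; have eff := Gbar_eff gG.
rewrite /fg (eq_bigr (fun z => if z \in twstab Finv g then 1 else 0)).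
  rewrite -big_mkcond /= sumr_const pnatr_eq0 -lt0n; apply/card_gt0P.
  by exists 1%g; rewrite inE twact1.
move=> z _; case: ifP => hz.
  have h := eff z hz; rewrite /theta h.
  by have [u _] := unit_b z; rewrite mulrK // cfb eqxx.
have [k hk] := inE_scal (theta_in z (b_in g)).
rewrite hk cfZb; case: eqP => // e.
by move: hz; rewrite inE -e eqxx.
Qed.

Definition t i e := \tr (rho i e *m J i).

Lemma t_lin i : islin (t i).
Proof.
have hi := simple_mod (rho_simple i).
split=> [x y|c x]; rewrite /t.
  by rewrite (modD hi) mulmxDl mxtraceD.
by rewrite (modZ hi) -scalemxAl mxtraceZ.
Qed.

Lemma t_isT i : i \in S -> isT (t i).
Proof.
move=> iS x y; have hi := simple_mod (rho_simple i); have [_ hJ] := J_twist iS.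
rewrite /t !(modM hi) -mulmxA hJ mulmxA mxtrace_mulC mulmxA.
by [].
Qed.
Lemma modB m (sg : A -> 'M[algC]_m) a a' : is_Emodule sg -> sg (a - a') = sg a - sg a'.
Proof. by move=> hs; rewrite -scaleN1r addrC (modL hs) scaleN1r addrC. Qed.

Lemma Phi_ext a a' : (forall j, rho j a = rho j a') -> a = a'.
Proof.
move=> h; apply/eqP; rewrite -subr_eq0; apply/eqP; apply: Phi_inj => j.
by rewrite (modB _ _ (simple_mod (rho_simple j))) h subrr.
Qed.

Lemma s_lin i c Z Z' : s (c *: Z + Z') = c *: @s i Z + s Z'.
Proof.
apply: Phi_ext => j; have hj := simple_mod (rho_simple j).
rewrite (modL hj); case: (eqVneq i j) => [<-|ij]; first by rewrite !s_self.
by rewrite !s_other // scaler0 addr0.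
Qed.

Lemma s_Z i c Z : @s i (c *: Z) = c *: @s i Z.
Proof.
apply: Phi_ext => j; have hj := simple_mod (rho_simple j).
rewrite [RHS](modZ hj); case: (eqVneq i j) => [<-|ij]; first by rewrite !s_self.
by rewrite !s_other // scaler0.
Qed.

Lemma decomp a : a = \sum_i s (rho i a).
Proof.
apply: Phi_ext => j; have hj := simple_mod (rho_simple j).
rewrite (mod_sum hj) (bigD1 j) //= s_self big1 ?addr0 // => i ij.
exact: s_other.
Qed.

Lemma tr_ext0 m (M : 'M[algC]_m) : (forall X, \tr (X *m M) = 0) -> M = 0.
Proof.
move=> h; apply/matrixP => k l; rewrite mxE.
have := h (delta_mx l k); rewrite -[delta_mx l k]mul1mx /mxtrace.
rewrite (bigD1 l) //= tri_delta big1 ?addr0.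
  by rewrite mxE eqxx mulr1n mul1r.
by move=> p pl; rewrite tri_delta mxE (negPf pl) mulr0n mul0r.
Qed.

Lemma span_notS f i : islin f -> isT f -> i \notin S -> forall Z, f (@s i Z) = 0.
Proof.
move=> hf hT iS Z; have [fD fZ] := hf.
have hi := simple_mod (rho_simple i); have [hl h1 hm] := hi.
pose sg := fun e => rho i (iota e).
have sgsim : is_simple_Emodule sg.
  split; last 1 first.
  - move=> W hW; case: (rho_simple i) => _ _ sim; apply: sim => e.
    by have := hW (iv e); rewrite /sg ivVK.
  - split; rewrite /sg.
    + by move=> c a a'; rewrite linearP /= hl.
    + by rewrite rmorph1 h1.
    + by move=> a a'; rewrite rmorphM hm.
  - exact: n_gt0.
have [k [P [Pfr Pfu hP]]] := rho_all sgsim.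
case: (eqVneq k i) => [ki|ki].
  subst k; case/negP: iS; apply/S_def; exists P; split.
    by rewrite -row_free_unit.
  exact: hP.
have [Q hQ] := row_fullP Pfu.
have hk := simple_mod (rho_simple k).
have key X Y : f (@s i (Q *m X *m P *m Y)) = 0.
  pose x := @s k X; pose y := @s i Y.
  have xy : x * y = 0.
    apply: Phi_inj => j; rewrite (modM (simple_mod (rho_simple j))).
    case: (eqVneq i j) => [<-|ij]; first by rewrite /x s_other // mulmx0.
    by rewrite /y s_other // mul0mx.
  have yix : y * iota x = @s i (Q *m X *m P *m Y).
    apply: Phi_ext => j; rewrite (modM (simple_mod (rho_simple j))).
    case: (eqVneq i j) => [<-|ij]; last by rewrite /y !s_other // mulmx0.
    rewrite s_self /y s_self; congr (_ *m _).
    have e := hP x; rewrite /x s_self /sg in e.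
    by rewrite /x -mulmxA e mulmxA hQ mul1mx.
  by rewrite -yix -hT xy -(scale0r 0) fZ mul0r.
have := key (P *m Z *m Q) 1%:M.
by rewrite mulmx1 !mulmxA hQ mul1mx -mulmxA hQ mulmx1.
Qed.
Lemma span_S f i : islin f -> isT f -> i \in S ->
  exists k, forall Z, f (@s i Z) = k * \tr (Z *m J i).
Proof.
move=> hf hT iS; have [fD fZ] := hf; have [Ju hJ] := J_twist iS.
have hi := simple_mod (rho_simple i).
pose phi Z := f (@s i Z).
have phiD Z Z' : phi (Z + Z') = phi Z + phi Z'.
  by rewrite /phi -[Z in Z + Z']scale1r s_lin fD scale1r.
have phiZ c Z : phi (c *: Z) = c * phi Z.
  by rewrite /phi s_Z fZ.
have phi0 : phi 0 = 0 by have := phiZ 0 0; rewrite scale0r mul0r.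
pose G := \matrix_(k, l) phi (delta_mx l k).
have hG Z : phi Z = \tr (Z *m G).
  rewrite {1}(matrix_sum_delta Z) (big_morph phi phiD phi0) /mxtrace.
  apply: eq_bigr => k _; rewrite (big_morph phi phiD phi0) mxE.
  by apply: eq_bigr => l _; rewrite phiZ !mxE.
have hix e : rho i (iota e) = invmx (J i) *m rho i e *m J i.
  by rewrite -mulmxA hJ mulKmx.
have key X Y : \tr (Y *m X *m G) = \tr (invmx (J i) *m X *m J i *m Y *m G).
  rewrite -!hG /phi.
  have -> : @s i (Y *m X) = @s i X * @s i Y.
    apply: Phi_ext => j; rewrite [RHS](modM (simple_mod (rho_simple j))).
    case: (eqVneq i j) => [<-|ij]; first by rewrite !s_self.
    by rewrite !s_other // mulmx0.
  rewrite hT; congr (f _); apply: Phi_ext => j; rewrite [LHS](modM (simple_mod (rho_simple j))).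
  case: (eqVneq i j) => [<-|ij]; last by rewrite !s_other // mulmx0.
  by rewrite hix !s_self.
have hGY Y : G *m Y = J i *m Y *m G *m invmx (J i).
  apply/eqP; rewrite -subr_eq0; apply/eqP; apply: tr_ext0 => X.
  rewrite mulmxBr linearB /=; apply/eqP; rewrite subr_eq0; apply/eqP.
  have l1 : \tr (X *m (G *m Y)) = \tr (Y *m X *m G).
    by rewrite mulmxA mxtrace_mulC mulmxA.
  rewrite l1 key -!mulmxA (mxtrace_mulC (invmx (J i))).
  by rewrite !mulmxA.
have GJ : G *m J i = J i *m G.
  have h1 := hGY 1%:M; rewrite !mulmx1 in h1.
  by rewrite {1}h1 mulmxKV.
have GJ' : invmx (J i) *m G = G *m invmx (J i).
  by rewrite -{2}[G](mulKmx Ju) -mulmxA -GJ mulmxK.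
have [k hk] : exists k, invmx (J i) *m G = k%:M.
  apply: (Schur2 (rho_simple i)) => e.
  by rewrite -[RHS]mulmxA hGY -!mulmxA mulKmx // GJ'.
exists k => Z; rewrite -/(phi Z) hG.
have -> : G = k *: J i by rewrite -[G](mulKVmx Ju) hk mul_mx_scalar.
by rewrite -scalemxAr mxtraceZ.
Qed.

Lemma span f : islin f -> isT f ->
  exists kap : 'I_r' -> algC, forall a, f a = \sum_(i in S) kap i * t i a.
Proof.
move=> hf hT; have [fD fZ] := hf.
exists (fun i => f (@s i (invmx (J i))) / (n i)%:R) => a.
rewrite {1}(decomp a) (big_morph f fD (lin0 hf)).
rewrite (bigID (mem S)) /= [X in _ + X]big1 ?addr0; last first.
  by move=> i iS; apply: span_notS.
apply: eq_bigr => i iS; have [k hk] := span_S hf hT iS; have [Ju _] := J_twist iS.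
by rewrite !hk mulVmx // mxtrace1 mulfK ?n_neq0.
Qed.
Lemma inj_rf m1 m2 (N : 'M[algC]_(m1, m2)) :
  (forall c : 'rV_m1, c *m N = 0 -> c = 0) -> row_free N.
Proof. by move=> h; rewrite -kermx_eq0; apply/rowV0P => v /sub_kermxP; apply: h. Qed.

Lemma main_sec : let M := \matrix_(i < #|S|, j < #|Gbar|)
             \tr (rho (enum_val i) (b (enum_val j)) *m J (enum_val i)) in
  #|Gbar| = #|S| /\ row_free M /\ row_full M.
Proof.
move=> M.
have Mfree : row_free M.
  apply: inj_rf => c hc.
  pose f e := \sum_i c 0 i * t (enum_val i) e.
  have fl : islin f.
    split=> [x y|a x]; rewrite /f.
      rewrite -big_split; apply: eq_bigr => i _.
      by have [tD _] := t_lin (enum_val i); rewrite tD mulrDr.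
    rewrite mulr_sumr; apply: eq_bigr => i _.
    by have [_ tZ] := t_lin (enum_val i); rewrite tZ mulrCA.
  have fT : isT f.
    move=> x y; rewrite /f; apply: eq_bigr => i _.
    by rewrite (t_isT (enum_valP i)).
  have f0 : forall g, g \in Gbar -> f (b g) = 0.
    move=> g gG; have := congr1 (fun m : 'rV[algC]_#|Gbar| => m 0 (enum_rank_in gG g)) hc.
    rewrite [RHS]mxE mxE => h; rewrite -h /f; apply: eq_bigr => i _.
    by rewrite mxE enum_rankK_in.
  have fz := T_eval0 fl fT f0.
  apply/rowP => i0; rewrite mxE.
  set k := enum_val i0; have kS : k \in S by apply: enum_valP.
  have [Ju _] := J_twist kS.
  have := fz (@s k (invmx (J k))); rewrite /f (bigD1 i0) //= big1 ?addr0.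
    rewrite /t -/k s_self mulVmx // mxtrace1 => /eqP; rewrite mulf_eq0 (negPf (n_neq0 k)) orbF.
    by move/eqP.
  move=> i ii0; rewrite /t s_other ?mul0mx ?linear0 ?mulr0 //.
  by rewrite /k (inj_eq enum_val_inj) eq_sym.
have hS : (#|S| <= #|Gbar|)%N.
  by move: Mfree; rewrite /row_free => /eqP <-; apply: rank_leq_col.
have hG : (#|Gbar| <= #|S|)%N.
  pose N := \matrix_(j < #|Gbar|, j' < #|Gbar|) fg (enum_val j) (b (enum_val j')).
  have Nfree : row_free N.
    apply: inj_rf => c hc; apply/rowP => j0; rewrite mxE.
    have := congr1 (fun m : 'rV[algC]_#|Gbar| => m 0 j0) hc; rewrite !mxE (bigD1 j0) //= big1 ?addr0.
      rewrite mxE => /eqP; rewrite mulf_eq0 (negPf (fg_diag (enum_valP j0))) orbF.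
      by move/eqP.
    move=> j jj0; rewrite mxE fg_off ?mulr0 ?enum_valP //.
    by rewrite (inj_eq enum_val_inj).
  have NM : (N <= M)%MS.
    apply/row_subP => j.
    have [kap hk] := span (fg_lin (enum_val j)) (fg_T (enum_val j)).
    have -> : row j N = (\row_i kap (enum_val i)) *m M.
      apply/rowP => j'; rewrite !mxE hk big_enum_val; apply: eq_bigr => i _.
      by rewrite !mxE.
    exact: submxMl.
  move: Nfree; rewrite /row_free => /eqP <-.
  by apply: leq_trans (mxrankS NM) (rank_leq_row M).
have e : #|Gbar| = #|S| by apply/eqP; rewrite eqn_leq hG hS.
split=> //; split=> //.
rewrite /row_full; move: Mfree; rewrite /row_free => /eqP ->.
by rewrite e.
Qed.
End Main.

Unset Implicit Arguments.

Theorem mainTheorem16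
  (gT : finGroupType)
  (F : gT -> gT) (F_inj : injective F)
  (F_morph : {morph F : x y / (x * y)%g})
  (A : falgType algC)
  (E : gT -> {vspace A})
  (E_sum : (\sum_(w : gT) E w)%VS = fullv)
  (E_direct : directv (\sum_(w : gT) E w))
  (E_dim : forall w : gT, \dim (E w) = 1%N)
  (E_mul : forall w y : gT, (E w * E y)%VS = E (w * y)%g)
  (b : gT -> A)
  (b_in : forall w : gT, b w \in E w)
  (b_neq0 : forall w : gT, b w != 0)
  (iota : 'AEnd(A))
  (iota_inj : lker iota = 0%VS)
  (iota_grad : forall w : gT, (iota @: E w)%VS = E (F w))
  (r' : nat) (n : 'I_r' -> nat) (rho : forall i : 'I_r', A -> 'M[algC]_(n i))
  (rho_simple : forall i, is_simple_Emodule (rho i))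
  (rho_all : forall (m : nat) (sigma : A -> 'M[algC]_m),
      is_simple_Emodule sigma -> exists i, Emod_iso (rho i) sigma)
  (rho_distinct : forall i j, Emod_iso (rho i) (rho j) -> i = j)
  (S : {set 'I_r'})
  (S_def : forall i, i \in S <-> exists J, iota_twist iota (rho i) J)
  (J : forall i : 'I_r', 'M[algC]_(n i))
  (J_twist : forall i, i \in S -> iota_twist iota (rho i) (J i))
  (Gbar : {set gT})
  (Gbar_eff : forall x, x \in Gbar -> effective (invF F_inj) b iota x)
  (Gbar_rep : forall x, effective (invF F_inj) b iota x ->
      exists! g, g \in Gbar /\ g \in twclass (invF F_inj) x) :
  let M := \matrix_(i < #|S|, j < #|Gbar|)
             \tr (rho (enum_val i) (b (enum_val j)) *m J (enum_val i)) in
  #|Gbar| = #|S| /\ row_free M /\ row_full M.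
Proof.
exact: (main_sec F_morph E_sum E_direct E_dim E_mul b_in b_neq0 iota_inj iota_grad
  rho_simple rho_all rho_distinct S_def J_twist Gbar_eff Gbar_rep).
Qed.
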